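(* Let $n\ge 2$ be an integer and let $$\mathcal{T}_n:=\{(0,S_1,\dots,S_{2n})\in\mathbb{Z}^{2n+1}: |S_i-S_{i-1}|=1 \text{ for } 1\le i\le 2n\ (S_0=0),\ S_{2n}=0,\ S_i\ge 0 \text{ for all } 1\le i\le 2n-1\}.$$ For a path $(0,S_1,\dots,S_{2n})\in\mathcal{T}_n$ let $N(0,S_1,\dots,S_{2n}):=|\{i\in\{1,\dots,n-1\}: S_{2i}=0\}|$, and set $$C_n:=\{S\in\mathcal{T}_n: N(S)=0\},\qquad D_n:=\{S\in\mathcal{T}_n: N(S)=1\}.$$ For $(0,S_1,\dots,S_{2n})\in C_n$ let $\tau:=\min\{k>1: S_k=1\}$, and for $\ell=1,\dots,2n$ define $$T_\ell:=\begin{cases}S_\ell-2 & \text{if } 1<\ell<\tau \text{ and } S_{\ell+1}=S_\ell-1,\\ S_\ell & \text{otherwise},\end{cases}$$ and let $\Phi_2(0,S_1,\dots,S_{2n}):=(0,T_1,\dots,T_{2n})$. Then $\Phi_2$ is a well-defined map from $C_n$ to $D_n$ and it is a bijection between $C_n$ and $D_n$.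
   Context: $C_n$ is the set of $2n$-step simple random walk paths from $0$ to $0$ that are strictly positive at all intermediate times $1,\dots,2n-1$; $D_n$ is the set of $2n$-step simple random walk paths from $0$ to $0$ that are nonnegative at all times and return to $0$ at exactly one intermediate time. *)

(* Defs.v *)
(* A path (0,S_1,...,S_2n) is a sequence s : seq int of size
   2n+1 with nth 0 s i = S_i (so s`_0 = S_0 = 0). *)
From mathcomp Require Import all_boot all_order all_algebra.
Set Implicit Arguments. Unset Strict Implicit. Unset Printing Implicit Defensive.
Import Order.TTheory GRing.Theory Num.Theory.
Local Open Scope ring_scope.

Definition Tn (n : nat) (s : seq int) : Prop :=
  [/\ size s = (2 * n).+1,
      s`_0 = 0,
      (forall i : nat, (1 <= i <= 2 * n)%N -> `|s`_i - s`_i.-1| = 1),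
      s`_(2 * n) = 0
    & (forall i : nat, (1 <= i <= (2 * n).-1)%N -> 0 <= s`_i)].

Definition Ncount (n : nat) (s : seq int) : nat :=
  count (fun i => s`_(2 * i) == 0) (iota 1 n.-1).

Definition Cn (n : nat) (s : seq int) : Prop := Tn n s /\ Ncount n s = 0%N.
Definition Dn (n : nat) (s : seq int) : Prop := Tn n s /\ Ncount n s = 1%N.

(* tau = min { k > 1 : S_k = 1 } (returns size s if no such k, which never
   happens for s in C_n with n >= 2). *)
Definition tau (s : seq int) : nat := (2 + find (pred1 (1 : int)) (drop 2 s))%N.

Definition Phi2 (s : seq int) : seq int :=
  mkseq (fun l => if (1 < l < tau s)%N && (s`_l.+1 == s`_l - 1)
                  then s`_l - 2 else s`_l) (size s).

(* Main.v *)
Require Import Defs.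
From mathcomp Require Import all_boot all_order all_algebra zify.
Import Order.TTheory GRing.Theory Num.Theory.
Set Implicit Arguments. Unset Strict Implicit.
Local Open Scope ring_scope.

Lemma nrm (x : int) : `|x| = 1 <-> (x = 1 \/ x = -1).
Proof.
case: (lerP 0 x) => h; [rewrite ger0_norm // | rewrite ltr0_norm //]; split; lia.
Qed.

Lemma par n s : Tn n s -> forall i, (i <= 2*n)%N -> exists k : int, s`_i = i%:Z + 2*k.
Proof.
case=> _ h0 hst _ _; elim=> [|i IH] hi; first by exists 0; rewrite h0.
have [k hk] := IH (ltnW hi).
have h : `|s`_i.+1 - s`_i| = 1 := hst i.+1 ltac:(lia).
have [e|e] : s`_i.+1 = s`_i + 1 \/ s`_i.+1 = s`_i - 1 by lia.
- by exists k; lia.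
- by exists (k - 1); lia.
Qed.

Lemma odd_ne0 n s : Tn n s -> forall i, (i <= 2*n)%N -> odd i -> s`_i != 0.
Proof. move=> hT i hi ho; have [k hk] := par hT hi; lia. Qed.

Lemma C_pos n s : Cn n s -> forall l, (1 <= l <= (2*n).-1)%N -> 1 <= s`_l.
Proof.
move=> [hT hN] l hl; have [_ _ _ _ hnn] := hT; have := hnn l hl.
suff: s`_l != 0 by lia.
case ho: (odd l); first by apply: (odd_ne0 hT) => //; lia.
have hl2 := odd_double_half l; rewrite ho -mul2n /= add0n in hl2.
have : ~~ has (fun i => s`_(2 * i) == 0) (iota 1 n.-1) by rewrite has_count -/(Ncount n s) hN.
move=> /hasPn /(_ (l./2)).
rewrite mem_iota hl2; apply; lia.
Qed.

Lemma C_12 n s : (2 <= n)%N -> Cn n s -> s`_1 = 1 /\ s`_2 = 2.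
Proof.
move=> hn hC; have [[_ h0 hst _ _] _] := hC.
have p1 : 1 <= s`_1 := C_pos hC (l:=1) ltac:(lia).
have p2 : 1 <= s`_2 := C_pos hC (l:=2) ltac:(lia).
have e1 : `|s`_1 - s`_0| = 1 := hst 1%N ltac:(lia).
have e2 : `|s`_2 - s`_1| = 1 := hst 2%N ltac:(lia).
lia.
Qed.

Lemma find_eq {T : eqType} (p : pred T) x0 s j : (j < size s)%N -> p (nth x0 s j) ->
  (forall k, (k < j)%N -> ~~ p (nth x0 s k)) -> find p s = j.
Proof.
move=> hj hp hb; have hh : has p s by apply/(has_nthP x0); exists j.
case: (ltngtP (find p s) j) => // h.
- by have := hb _ h; rewrite nth_find.
- by have := before_find x0 h; rewrite hp.
Qed.

Lemma tau_facts n s : (2 <= n)%N -> Cn n s ->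
  [/\ (3 <= tau s <= (2*n).-1)%N, s`_(tau s) = 1 &
      forall l, (2 <= l < tau s)%N -> 2 <= s`_l].
Proof.
move=> hn hC; have [[hs h0 hst hN hnn] _] := hC.
have [e1 e2] := C_12 hn hC.
have hlast : s`_((2*n).-1) = 1.
  have a : `|s`_(2*n) - s`_((2*n).-1)| = 1 := hst (2*n)%N ltac:(lia).
  have b : 0 <= s`_((2*n).-1) := hnn ((2*n).-1) ltac:(lia).
  rewrite hN in a; lia.
set d := drop 2 s.
have hsz : size d = (2*n - 1)%N by rewrite size_drop hs; lia.
have hw : nth 0 d ((2*n).-1 - 2) = 1 by rewrite nth_drop; have -> : (2 + ((2 * n).-1 - 2) = (2*n).-1)%N by lia.
have hh : has (pred1 (1:int)) d by apply/(has_nthP (0:int)); exists ((2*n).-1 - 2)%N; [rewrite hsz; lia| rewrite /= hw].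
have hle : (find (pred1 (1:int)) d <= (2*n).-1 - 2)%N.
  rewrite leqNgt; apply/negP => h; have := before_find (0:int) h; by rewrite hw /= eqxx.
have hf := nth_find (0:int) hh; rewrite nth_drop /= in hf.
have h0f : find (pred1 (1:int)) d != 0%N.
  apply/negP => /eqP h; rewrite h addn0 e2 in hf; by [].
split; rewrite /tau -/d.
- lia.
- exact/eqP.
- move=> l hl.
  have hlt : (l - 2 < find (pred1 (1:int)) d)%N by move: hl; rewrite /tau -/d; lia.
  have hb := before_find (0:int) hlt.
  rewrite nth_drop in hb; have -> : l = (2 + (l - 2))%N by lia.
  have := C_pos hC (l := (2 + (l - 2))%N) ltac:(lia). have hb2 : s`_(2 + (l - 2)) <> 1 by move=> e; move: hb; rewrite e /= eqxx.
  lia.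
Qed.

Lemma Phi2_nth n s : (2 <= n)%N -> Cn n s -> forall l, (l <= 2*n)%N ->
  (Phi2 s)`_l = if l == 0%N then 0 else if (l < tau s)%N then s`_l.+1 - 1 else s`_l.
Proof.
move=> hn hC l hl; have [[hs h0 hst hN hnn] _] := hC.
have [e1 e2] := C_12 hn hC; have [ht htau hgt] := tau_facts hn hC.
rewrite /Phi2 nth_mkseq; last by rewrite hs.
case: (posnP l) => [->|lp]; first by rewrite /= h0.
case: (ltnP l (tau s)) => hlt; last by rewrite !andbF.
case: (ltnP 1 l) => l1; last first.
  have -> : l = 1%N by lia.
  rewrite /= e1 e2; lia.
rewrite andbT.
have st : `|s`_l.+1 - s`_l| = 1 := hst l.+1 ltac:(lia).
case: ifP => H.
  have ee : s`_l.+1 = s`_l - 1 by apply/eqP; move: H; rewrite !andTb.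
  lia.
have ee : s`_l.+1 <> s`_l - 1 by move=> e; move: H; rewrite e eqxx.
lia.
Qed.

Ltac ifs := repeat (case: ifP => ?).

Lemma part1 n s : (2 <= n)%N -> Cn n s -> Dn n (Phi2 s).
Proof.
move=> hn hC; have [[hs h0 hst hN hnn] _] := hC.
have [e1 e2] := C_12 hn hC; have [ht htau hgt] := tau_facts hn hC.
have hP := Phi2_nth hn hC.
have pos := C_pos hC.
set a := tau s in ht htau hgt hP.
have hao : odd a by have [k hk] := par hC.1 (i:=a) ltac:(lia); lia.
have hh := odd_double_half a; rewrite hao -mul2n in hh.
split; [split|].
- by rewrite size_mkseq hs.
- by rewrite hP.
- move=> i hi; rewrite (hP i) ?(hP i.-1); try lia.
  have st := hst i hi.
  case: (ltnP i a) => hia.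
  + have st2 : `|s`_i.+1 - s`_i| = 1 := hst i.+1 ltac:(lia).
    case: (eqVneq i 1%N) => [->|i1]; first by rewrite /= e2; lia.
    have ip : i.-1.+1 = i by lia.
    rewrite ip; ifs; lia.
  + ifs; try lia.
    have -> : i = a by lia.
    have ip : a.-1.+1 = a by lia.
    rewrite ip; lia.
- rewrite hP //; ifs; lia.
- move=> i hi; rewrite hP; last by lia.
  ifs; try lia.
  have := pos i.+1 ltac:(lia); lia.
  have := hnn i hi; lia.
- have hE : forall i : nat, (1 <= i < 1 + n.-1)%N ->
      ((Phi2 s)`_(2*i) == 0) = (i == a./2).
    move=> i hi; rewrite hP; last by lia.
    case: (eqVneq i a./2) => [->|hne].
    * apply/eqP; have ip : (2 * a./2).+1 = a by lia.
      rewrite ip; ifs; lia.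
    * ifs; try lia.
      have := hgt (2 * i).+1 ltac:(lia); lia.
      have := pos (2 * i)%N ltac:(lia); lia.
  rewrite /Ncount (eq_in_count (a2 := pred1 a./2)).
  + rewrite count_uniq_mem ?iota_uniq // mem_iota.
    have -> : (1 <= a./2 < 1 + n.-1)%N = true by lia.
    by [].
  + by move=> i; rewrite mem_iota => hi; apply: hE.
Qed.

Lemma part2 n s t : (2 <= n)%N -> Cn n s -> Cn n t -> Phi2 s = Phi2 t -> s = t.
Proof.
move=> hn hs ht E.
have [[ss s0 sst sN snn] _] := hs; have [[ts t0 tst tN tnn] _] := ht.
have [s1 s2] := C_12 hn hs; have [t1 t2] := C_12 hn ht.
have [sa sta sgt] := tau_facts hn hs; have [tb ttb tgt] := tau_facts hn ht.
have hPs := Phi2_nth hn hs; have hPt := Phi2_nth hn ht.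
have sp := C_pos hs; have tp := C_pos ht.
have hab : tau s = tau t.
  have A := hPs (tau s).-1 ltac:(lia); have B := hPt (tau s).-1 ltac:(lia).
  have C := congr1 (fun u => nth (0:int) u (tau s).-1) E; simpl in C.
  have ip : (tau s).-1.+1 = tau s by lia.
  rewrite A B ip in C.
  case: (ltnP (tau s) (tau t)) => h.
    have F := tgt (tau s) ltac:(lia); move: C; ifs; lia.
  have F := tp ((tau s).-1) ltac:(lia); move: C; ifs; lia.
apply: (@eq_from_nth _ (0:int)); first by rewrite ss ts.
move=> l; rewrite ss => hl; change (s`_l = t`_l).
case: (ltnP l (tau s)) => hl2.
  case: (posnP l) => [->|lp]; first by rewrite s0 t0.
  case: (eqVneq l 1%N) => [->|l1]; first by rewrite s1 t1.
  have A := hPs l.-1 ltac:(lia); have B := hPt l.-1 ltac:(lia).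
  have C := congr1 (fun u => nth (0:int) u l.-1) E; simpl in C.
  have ip : l.-1.+1 = l by lia.
  rewrite A B ip -hab in C; move: C; ifs; lia.
have A := hPs l ltac:(lia); have B := hPt l ltac:(lia).
have C := congr1 (fun u => nth (0:int) u l) E; simpl in C.
rewrite A B -hab in C; move: C; ifs; lia.
Qed.

Lemma part3 n t : (2 <= n)%N -> Dn n t -> exists s, Cn n s /\ Phi2 s = t.
Proof.
move=> hn [hT hN]; have [ts t0 tst tN tnn] := hT.
have hhas : has (fun i => t`_(2 * i) == 0) (iota 1 n.-1)
  by rewrite has_count -/(Ncount n t) hN.
have [j hj tj] : exists2 j : nat, (0 < j < 1 + n.-1)%N & t`_(2 * j)%N = 0.
  by move/hasP: hhas => [j]; rewrite mem_iota => hj /eqP hj0; exists j.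
set m := (2 * j)%N in tj.
have tge : forall l, (l <= 2 * n)%N -> 0 <= t`_l.
  move=> l hl; case: (posnP l) => [->|lp]; first by rewrite t0.
  case: (eqVneq l (2 * n)%N) => [->|ln]; first by rewrite tN.
  apply: tnn; lia.
have uniq0 : forall l, (1 <= l <= (2 * n).-1)%N -> t`_l = 0 -> l = m.
  move=> l hl hl0.
  case ho: (odd l).
    by have := odd_ne0 hT (i:=l) ltac:(lia) ho; rewrite hl0 eqxx.
  have hl2 := odd_double_half l; rewrite ho -mul2n /= add0n in hl2.
  case: (eqVneq (l./2) j) => [e|ne]; first by rewrite /m -e.
  have : leq 2 (count (fun i : nat => t`_(2 * i) == 0) (iota 1 n.-1)).
    rewrite -size_filter.
    have -> : 2%N = size [:: l./2; j] by [].
    apply: uniq_leq_size; first by rewrite /= inE ne.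
    move=> x; rewrite !inE => /orP [] /eqP ->; rewrite mem_filter mem_iota.
      by rewrite hl2 hl0 eqxx /=; apply/andP; split; lia.
    by rewrite tj eqxx /=.
  by rewrite -/(Ncount n t) hN.
have tpos : forall l, (1 <= l <= (2 * n).-1)%N -> l != m -> 1 <= t`_l.
  move=> l hl lm; have := tnn l hl; have : t`_l <> 0 by move=> e; have := uniq0 l hl e; apply/eqP.
  lia.
have tm1 : t`_m.-1 = 1.
  have a : `|t`_m - t`_m.-1| = 1 := tst m ltac:(lia).
  have b := tnn m.-1 ltac:(lia); lia.
have tp1 : t`_m.+1 = 1.
  have a : `|t`_m.+1 - t`_m| = 1 := tst m.+1 ltac:(lia).
  have b := tnn m.+1 ltac:(lia); lia.
pose f := fun l => if l == 0%N then (0:int) else if (l <= m)%N then t`_l.-1 + 1 else t`_l.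
exists (mkseq f (2 * n).+1).
set s := mkseq f (2 * n).+1.
have hs : forall l, (l <= 2 * n)%N -> s`_l = f l by move=> l hl; rewrite nth_mkseq.
have hC : Cn n s.
  split; [split|].
  - by rewrite size_mkseq.
  - by rewrite hs.
  - move=> i hi; have A := hs i ltac:(lia); have B := hs i.-1 ltac:(lia).
    rewrite A B /f.
    case: (eqVneq i 1%N) => [->|i1].
      rewrite /=; ifs; try lia. by rewrite t0.
    case: (ltngtP i m.+1) => hm.
    + have st : `|t`_i.-1 - t`_i.-1.-1| = 1 := tst i.-1 ltac:(lia).
      ifs; lia.
    + have st : `|t`_i - t`_i.-1| = 1 := tst i ltac:(lia).
      ifs; lia.
    + rewrite hm; have : t`_(m.+1.-1.-1) = 1 := tm1.
      ifs; lia.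
  - rewrite hs // /f; ifs; lia.
  - move=> i hi; rewrite hs; last by lia.
    have := tge i ltac:(lia); have := tge i.-1 ltac:(lia).
    rewrite /f; ifs; lia.
  - rewrite /Ncount; apply/eqP; rewrite -leqn0 leqNgt -has_count; apply/hasPn => i.
    rewrite mem_iota => hi.
    have hE : forall i : nat, (1 <= i < 1 + n.-1)%N -> s`_(2 * i)%N != 0.
      move=> k hk; rewrite hs; last by lia.
      rewrite /f; ifs; try lia.
        have := tge (2 * k)%N.-1 ltac:(lia); lia.
      have := tpos (2 * k)%N ltac:(lia) ltac:(lia); lia.
    exact: hE.
have htau : tau s = m.+1.
  rewrite /tau.
  have -> : find (pred1 (1:int)) (drop 2 s) = m.-1; last by lia.
  apply: (find_eq (x0 := (0:int))).
  - rewrite size_drop size_mkseq; lia.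
  - rewrite nth_drop; have -> : (2 + m.-1)%N = m.+1 by lia.
    rewrite hs; last by lia.
    rewrite /f; ifs; try lia. by rewrite tp1.
  - move=> k hk; rewrite nth_drop hs; last by lia.
    have := tpos (1 + k)%N ltac:(lia) ltac:(lia).
    rewrite /f; ifs; try lia.
    move=> h; apply/negP => /eqP e.
    have e' : t`_(1 + k) + 1 = 1 := e. lia.
split => //.
apply: (@eq_from_nth _ (0:int)); first by rewrite /Phi2 !size_mkseq ts.
move=> l hl0; change ((Phi2 s)`_l = t`_l).
have hl : (l <= 2 * n)%N by move: hl0; rewrite /Phi2 !size_mkseq; lia.
rewrite (Phi2_nth hn hC) ?htau; last by lia.
case: (posnP l) => [->|lp]; first by rewrite t0.
case: (ltnP l m.+1) => hlm.
  rewrite (hs l.+1); last by lia.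
  have : t`_(l.+1.-1) = t`_l := erefl.
  have : t`_(m.+1) = 1 := tp1.
  rewrite /f; ifs; try lia.
  have -> : l = m by lia.
  lia.
rewrite hs; last by lia.
rewrite /f; ifs; lia.
Qed.

Theorem theorem2 (n : nat) (hn : (2 <= n)%N) :
  (forall s, Cn n s -> Dn n (Phi2 s)) /\
  (forall s t, Cn n s -> Cn n t -> Phi2 s = Phi2 t -> s = t) /\
  (forall t, Dn n t -> exists s, Cn n s /\ Phi2 s = t).
Proof.
split; first by move=> s; apply: part1.
split; first by move=> s t; apply: part2.
by move=> t; apply: part3.
Qed.
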